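(* Under the same setting as the context (line-of-sight-only channel $\mathbf{h}_k=\alpha_k\mathbf{a}(\theta_k)$ with $\alpha_k\neq 0$), let $\hat\alpha\in\mathbb{C}\setminus\{0\}$ be arbitrary. Then $\phi\mapsto\gamma(\hat\alpha\,\mathbf{a}(\phi),\mathbf{F}_k,\mathbf{y}_k)$ attains its maximum over $[-\pi,\pi)$, and every maximizer $$\bar\phi^\star\in\arg\max_{\phi\in[-\pi,\pi)}\gamma(\hat\alpha\,\mathbf{a}(\phi),\mathbf{F}_k,\mathbf{y}_k)$$ satisfies $\mathbf{a}(\bar\phi^\star)=\mathbf{a}(\theta_k)$.
   Context: Let $N\ge 2$, $p_{\rm t}>0$, $\sigma^2>0$, and fix $k\in\{1,\dots,N\}$. The array response vector is $\mathbf{a}(\theta)=(1,e^{j\pi\sin\theta},\dots,e^{j\pi(N-1)\sin\theta})^{\mathsf T}\in\mathbb{C}^N$. $\mathbf{U}_N$ is the normalized DFT matrix, $\mathbf{U}_N(a,b)=\frac{1}{\sqrt N}e^{-j2\pi(a-1)(b-1)/N}$; $\mathbf{C}_N(i,k)=((i-k)\bmod N)+1$; and for $k'\in\{1,\dots,N\}$, $\mathbf{F}_{k'}$ is the matrix whose $n$-th column $\mathbf{p}_{[n,k']}$ is the $\mathbf{C}_N(n,k')$-th column of $\mathbf{U}_N$. For $n\in\{1,\dots,N\}$, $\mathbf{P}_n$ is the matrix whose $k'$-th column is $\mathbf{p}_{[n,k']}$. A symbol vector $\mathbf{s}\in\mathbb{C}^N$ with $\mathbb{E}[\mathbf{s}\mathbf{s}^{\mathsf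 H}]=\mathbf{I}_N$ is sent with $\mathbf{x}_n=\frac{1}{\sqrt N}\mathbf{P}_n\mathbf{s}$; device $k$ receives $\mathbf{y}_k=(y_{[1,k]},\dots,y_{[N,k]})^{\mathsf T}$ with $y_{[n,k]}=\sqrt{p_{\rm t}}\mathbf{h}_k^{\mathsf H}\mathbf{x}_n+z_{[n,k]}$, so that $\mathbf{y}_k=\sqrt{p_{\rm t}/N}\sum_{k'=1}^N\mathbf{s}(k')\mathbf{F}_{k'}^{\mathsf T}\mathbf{h}_k^{*}+\mathbf{z}_k$, where $\mathbf{z}_k$ is independent of $\mathbf{s}$, zero mean, with $\mathbb{E}[\mathbf{z}_k\mathbf{z}_k^{\mathsf H}]=\sigma^2\mathbf{I}_N$. For a candidate channel $\mathbf{h}\in\mathbb{C}^N$ with all entries nonzero, let $\tilde{\mathbf{h}}=\mathbf{1}_N\oslash(\mathbf{h}^* )$ (entrywise division), $g(\mathbf{h})=\tilde{\mathbf{h}}^{\mathsf T}\mathbf{F}_k^*\mathbf{F}_k^{\mathsf T}\mathbf{h}_k^*$, $v_{k'}(\mathbf{h})=\tilde{\mathbf{h}}^{\mathsf T}\mathbf{F}_k^*\mathbf{F}_{k'}^{\mathsf T}\mathbf{h}_k^*$, so that the combined signal $\tilde{\mathbf{h}}^{\mathsf T}\mathbf{F}_k^*\mathbf{y}_k=P+I$ with $P=\sqrt{p_{\rm t}/N}\,\mathbf{s}(k)g(\mathbf{h})$ and $I=\sqrt{p_{\rm t}/N}\sum_{k'\neq k}\mathbf{s}(k')v_{k'}(\mathbf{h})+\tilde{\mathbf{h}}^{\mathsf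 T}\mathbf{F}_k^*\mathbf{z}_k$. The SINR is $\gamma(\mathbf{h},\mathbf{F}_k,\mathbf{y}_k)=\mathbb{E}[|P|^2]/\mathbb{E}[|I|^2]$, expectations over $\mathbf{s}$ and $\mathbf{z}_k$. *)

(* Defs.v *)
From mathcomp Require Import all_boot all_order all_algebra.
From mathcomp Require Import all_classical all_reals all_analysis.
From mathcomp Require Import complex.
Set Implicit Arguments. Unset Strict Implicit. Unset Printing Implicit Defensive.
Import Order.TTheory GRing.Theory Num.Theory.
Local Open Scope ring_scope.

Section Defs.
Variable R : realType.
Local Notation C := R[i].

Definition expj (x : R) : C := Complex (cos x) (sin x).
Definition cconj (z : C) : C := Complex (complex.Re z) (- complex.Im z).
Definition sqmod (z : C) : R := complex.Re z ^+ 2 + complex.Im z ^+ 2.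
Definition conj_mx m n (A : 'M[C]_(m, n)) : 'M[C]_(m, n) := map_mx cconj A.

(* array response vector a(theta), 0-indexed: entry n is e^{j pi n sin theta} *)
Definition steer (N : nat) (th : R) : 'cV[C]_N :=
  \col_(n < N) expj (pi * n%:R * sin th).

(* normalized DFT matrix U_N (0-indexed): U(a,b) = 1/sqrt N e^{-j 2 pi a b / N} *)
Definition dftU (N : nat) : 'M[C]_N :=
  \matrix_(a < N, b < N)
    (Complex (Num.sqrt (N%:R))^-1 0 * expj (- (2 * pi * (a * b)%:R / N%:R))).

Lemma cidx_proof (N : nat) (i k : 'I_N) : ((i + N - k) %% N < N)%N.
Proof. by apply: ltn_pmod; apply: leq_ltn_trans (ltn_ord i). Qed.

(* C_N(i,k) - 1 = (i - k) mod N, 0-indexed *)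
Definition cidx (N : nat) (i k : 'I_N) : 'I_N := Ordinal (cidx_proof i k).

(* F_{k'}: its n-th column p_[n,k'] is the C_N(n,k')-th column of U_N *)
Definition Fmat (N : nat) (k' : 'I_N) : 'M[C]_N :=
  \matrix_(a < N, n < N) dftU N a (cidx n k').

Definition htilde (N : nat) (h : 'cV[C]_N) : 'cV[C]_N :=
  \col_(i < N) (cconj (h i 0))^-1.

Definition gval (N : nat) (k : 'I_N) (h hk : 'cV[C]_N) : C :=
  ((htilde h)^T *m conj_mx (Fmat k) *m (Fmat k)^T *m conj_mx hk) 0 0.
Definition vval (N : nat) (k k' : 'I_N) (h hk : 'cV[C]_N) : C :=
  ((htilde h)^T *m conj_mx (Fmat k) *m (Fmat k')^T *m conj_mx hk) 0 0.
Definition noise_comb (N : nat) (k : 'I_N) (h : 'cV[C]_N) : 'rV[C]_N :=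
  (htilde h)^T *m conj_mx (Fmat k).

(* SINR gamma(h, F_k, y_k) = E|P|^2 / E|I|^2, with the expectations evaluated
   from the second-order statistics E[s s^H] = I_N, E[z z^H] = sigma^2 I_N,
   z zero-mean and independent of s:
   E|P|^2 = p_t/N |g|^2,
   E|I|^2 = p_t/N sum_{k'<>k} |v_k'|^2 + sigma^2 || h~^T F_k^* ||^2. *)
Definition sinr (N : nat) (pt sigma2 : R) (k : 'I_N) (h hk : 'cV[C]_N) : R :=
  (pt / N%:R * sqmod (gval k h hk)) /
  (pt / N%:R * (\sum_(k' < N | k' != k) sqmod (vval k k' h hk))
   + sigma2 * \sum_(i < N) sqmod (noise_comb k h 0 i)).

End Defs.

(* Main.v *)
Require Import Defs.
From mathcomp Require Import all_boot all_order all_algebra.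
From mathcomp Require Import all_classical all_reals all_analysis.
From mathcomp Require Import complex.
From mathcomp Require Import ring lra.
Import Order.TTheory GRing.Theory Num.Theory.
Local Open Scope ring_scope.

Lemma cconjE (R : realType) (z : R[i]) : cconj z = z^*.
Proof. by case: z. Qed.

Lemma sqmodE (R : realType) (z : R[i]) : (sqmod z)%:C%C = z * z^*.
Proof. case: z => a b; rewrite /sqmod /=. simpc. apply/eqP; rewrite eq_complex /=; apply/andP; split; apply/eqP; ring. Qed.

Lemma expjD (R : realType) (x y : R) : expj (x + y) = expj x * expj y.
Proof. rewrite /expj cosD sinD; simpc. apply/eqP; rewrite eq_complex /=; apply/andP; split; apply/eqP; ring. Qed.

Lemma expjN (R : realType) (x : R) : expj (- x) = (expj x)^*.
Proof. by rewrite /expj cosN sinN. Qed.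

Lemma expj0 (R : realType) : expj (0:R) = 1.
Proof. by rewrite /expj cos0 sin0. Qed.

Lemma expjJ (R : realType) (x : R) : expj x * (expj x)^* = 1.
Proof. rewrite -sqmodE /sqmod /= cos2Dsin2 //. Qed.

Lemma expjn (R : realType) (n : nat) (x : R) : expj (n%:R * x) = expj x ^+ n.
Proof. elim: n => [|n IH]; first by rewrite mul0r expj0 expr0.
by rewrite -addn1 natrD mulrDl mul1r expjD IH exprD expr1. Qed.
Lemma cos_neq1 (R : realType) (x : R) : 0 < x < pi *+ 2 -> cos x != 1.
Proof.
move=> /andP[x0 x2]; apply/eqP => c1.
have hx : x = (x / 2) *+ 2 by rewrite -mulr_natr mulfVK // pnatr_eq0.
have : sin (x / 2) ^+ 2 = 0.
  rewrite sin2cos2; move: c1; rewrite [in cos x]hx cos_mulr2n => h.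
  have -> : cos (x / 2) ^+ 2 = 1.
    move: h; rewrite -mulr_natr; set c := cos _ ^+ 2 => h; lra.
  by rewrite subrr.
move/eqP; rewrite sqrf_eq0 => /eqP.
have : 0 < sin (x / 2).
  apply: sin_gt0_pi; apply/andP; split; first by rewrite divr_gt0.
  by rewrite ltr_pdivrMr // mulr_natr.
by move=> /gt_eqF; rewrite eq_sym => /eqP h1 h2; apply: h1.
Qed.
Definition wN (R : realType) (N : nat) : R[i] := expj (2 * pi / N%:R).

Lemma wN_exp (R : realType) (N m : nat) :
  expj (- (2 * pi * m%:R / N%:R)) = ((wN R N) ^+ m)^*.
Proof. by rewrite /wN -expjn expjN; congr (expj _)^*; ring. Qed.

Lemma wN_N (R : realType) (N : nat) : (0 < N)%N -> wN R N ^+ N = 1.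
Proof.
move=> N0; rewrite /wN -expjn mulrCA mulfV ?pnatr_eq0 -?lt0n // mulr1.
by rewrite /expj mulr_natl cos2pi sin2pi.
Qed.

Lemma expjXJ (R : realType) (x : R) (m : nat) : expj x ^+ m * (expj x ^+ m)^* = 1.
Proof. by rewrite rmorphXn -exprMn expjJ expr1n. Qed.

Lemma wN_neq1 (R : realType) (N m : nat) : (0 < m < N)%N -> wN R N ^+ m != 1.
Proof.
move=> /andP[m0 mN]; apply/negP => /eqP h.
have N0 : (0 < N%:R :> R) by rewrite ltr0n (ltn_trans m0).
have : cos (m%:R * (2 * pi / N%:R) : R) != 1.
  apply: cos_neq1; apply/andP; split.
    by rewrite mulr_gt0 ?ltr0n // divr_gt0 // mulr_gt0 // pi_gt0.
  rewrite mulrA ltr_pdivrMr // -mulr_natr.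
  have hm : (m%:R : R) < N%:R by rewrite ltr_nat.
  have p := @pi_gt0 R; nra.
by move: h; rewrite /wN -expjn /expj => -[-> _]; rewrite eqxx.
Qed.

Lemma wN_inj (R : realType) (N a b : nat) : (a < N)%N -> (b < N)%N ->
  wN R N ^+ a = wN R N ^+ b -> a = b.
Proof.
wlog ab : a b / (a <= b)%N.
  move=> H aN bN h; case: (leqP a b) => [/H|/ltnW /H]; first exact.
  by move=> H2; apply/esym/H2 => //.
move=> aN bN h; apply/eqP; rewrite eqn_leq ab /=; rewrite leqNgt; apply/negP => ltab.
have : wN R N ^+ (b - a) != 1 by apply: wN_neq1; rewrite subn_gt0 ltab /=; apply: leq_ltn_trans bN; exact: leq_subr.
have ha : wN R N ^+ a * (wN R N ^+ a)^* = 1 by apply: expjXJ.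
rewrite (_ : wN R N ^+ (b - a) = (wN R N ^+ a)^* * wN R N ^+ b).
  by rewrite -h mulrC ha eqxx.
by rewrite -{2}(subnK ab) exprD mulrCA [_^* * _]mulrC ha mulr1.
Qed.

Lemma geom_root (R : realType) (N : nat) (z : R[i]) : z ^+ N = 1 ->
  \sum_(n < N) z ^+ n = if z == 1 then N%:R else 0.
Proof.
move=> zN; case: eqP => [->|/eqP z1].
  by rewrite (eq_bigr (fun=> 1)) ?sumr_const ?card_ord // => i _; rewrite expr1n.
have := subrX1 z N; rewrite zN subrr => /esym/eqP; rewrite mulf_eq0 subr_eq0 (negbTE z1) /=.
by move/eqP.
Qed.
Lemma wNJ (R : realType) (N a : nat) : wN R N ^+ a * (wN R N ^+ a)^* = 1.
Proof. exact: expjXJ. Qed.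

Lemma dft_entry (R : realType) (N : nat) (k a n : 'I_N) :
  expj (- (2 * pi * (a * cidx n k)%:R / N%:R)) = ((wN R N ^+ a) ^+ (n + (N - k)))^*.
Proof.
have N0 : (0 < N)%N by apply: leq_ltn_trans (ltn_ord a).
rewrite wN_exp; congr (_^*).
rewrite -exprM /cidx /= !exprM expr_mod ?addnBA //; first exact: ltnW.
by rewrite -exprM mulnC exprM wN_N // expr1n.
Qed.

Lemma sqrtN_sq (R : realType) (N : nat) : (0 < N)%N ->
  (Complex (Num.sqrt (N%:R : R))^-1 0)^* * (Complex (Num.sqrt (N%:R : R))^-1 0) = (N%:R)^-1.
Proof.
move=> N0; rewrite mulrC -sqmodE /sqmod /= expr0n addr0 exprVn sqr_sqrtr ?ler0n //.
by rewrite fmorphV rmorph_nat.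
Qed.

Definition ee (R : realType) {N : nat} (k : 'I_N) (a : 'I_N) (k' : 'I_N) : R[i] :=
  (wN R N ^+ a) ^+ (N - k) * ((wN R N ^+ a) ^+ (N - k'))^*.

Lemma Dlemma (R : realType) (N : nat) (k k' a b : 'I_N) :
  (conj_mx (Fmat R k) *m (Fmat R k')^T) a b = (a == b)%:R * ee R k a k'.
Proof.
have N0 : (0 < N)%N by apply: leq_ltn_trans (ltn_ord a).
rewrite mxE.
set s := Complex (Num.sqrt (N%:R : R))^-1 0.
set z := wN R N ^+ a * (wN R N ^+ b)^*.
transitivity (\sum_(n < N) (N%:R)^-1 * ((wN R N ^+ a) ^+ (N - k) * ((wN R N ^+ b) ^+ (N - k'))^*) * z ^+ n).
  apply: eq_bigr => n _; rewrite !mxE cconjE !dft_entry rmorphM /= conjCK.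
  rewrite -(@sqrtN_sq R N N0) -/s !exprD !rmorphM !rmorphXn exprMn /z !rmorphXn; ring.
rewrite -big_distrr /= geom_root; last first.
  rewrite exprMn -rmorphXn -!exprM mulnC exprM wN_N // expr1n mulnC exprM wN_N //.
  by rewrite !expr1n rmorph1 mulr1.
have zE : (z == 1) = (a == b).
  apply/idP/idP => [/eqP zE|/eqP ab]; last by rewrite /z ab wNJ.
  have : wN R N ^+ a = wN R N ^+ b.
    by rewrite -[LHS]mulr1 -(wNJ R N b) [X in _ * X]mulrC mulrA -/z zE mul1r.
  by move/wN_inj => /(_ (ltn_ord a) (ltn_ord b)) ab; apply/eqP/val_inj.
rewrite zE; case: eqP => [->|_]; last by rewrite !mulr0 mul0r.
rewrite /ee mul1r mulrC mulrA mulfV ?mul1r // pnatr_eq0 -lt0n //.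
Qed.
Lemma conj_mxE (R : realType) m n (A : 'M[R[i]]_(m, n)) i j : conj_mx A i j = (A i j)^*.
Proof. by rewrite mxE cconjE. Qed.

Lemma quadE (R : realType) (N : nat) (k k' : 'I_N) (u v : 'cV[R[i]]_N) :
  (u^T *m conj_mx (Fmat R k) *m (Fmat R k')^T *m conj_mx v) 0 0 =
  \sum_(a < N) u a 0 * ee R k a k' * (v a 0)^*.
Proof.
rewrite -(mulmxA u^T) mxE; apply: eq_bigr => b _.
rewrite conj_mxE mxE (bigD1 b) //= big1 ?addr0.
  by rewrite mxE Dlemma eqxx mul1r.
by move=> a /negbTE ab; rewrite Dlemma ab mul0r mulr0.
Qed.

Lemma ee_kk (R : realType) (N : nat) (k a : 'I_N) : ee R k a k = 1.
Proof. by rewrite /ee -!exprM wNJ. Qed.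
Lemma zN (R : realType) (N : nat) (a b : 'I_N) :
  (wN R N ^+ a * (wN R N ^+ b)^*) ^+ N = 1.
Proof.
have N0 : (0 < N)%N by apply: leq_ltn_trans (ltn_ord a).
rewrite exprMn -rmorphXn -!exprM mulnC exprM wN_N // expr1n mulnC exprM wN_N //.
by rewrite !expr1n rmorph1 mulr1.
Qed.

Lemma z_eq1 (R : realType) (N : nat) (a b : 'I_N) :
  (wN R N ^+ a * (wN R N ^+ b)^* == 1) = (a == b).
Proof.
apply/idP/idP => [/eqP zE|/eqP ab]; last by rewrite ab wNJ.
have : wN R N ^+ a = wN R N ^+ b.
  by rewrite -[LHS]mulr1 -(wNJ R N b) [X in _ * X]mulrC mulrA zE mul1r.
by move/wN_inj => /(_ (ltn_ord a) (ltn_ord b)) ab; apply/eqP/val_inj.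
Qed.

Lemma orth2 (R : realType) (N : nat) (k a b : 'I_N) :
  \sum_(k' < N) ee R k a k' * (ee R k b k')^* = (a == b)%:R * N%:R.
Proof.
have N0 : (0 < N)%N by apply: leq_ltn_trans (ltn_ord a).
set u := wN R N ^+ a; set v := wN R N ^+ b.
set z := u * v^*.
have zz : z * z^* = 1.
  by rewrite /z rmorphM /= conjCK mulrACA /u /v [X in _ * X]mulrC !wNJ mulr1.
have zN' : z ^+ N = 1 by apply: zN.
transitivity (\sum_(k' < N) (u ^+ (N - k) * (v ^+ (N - k))^*) * z ^+ k').
  apply: eq_bigr => k' _; rewrite /ee -/u -/v rmorphM /= conjCK mulrACA.
  have -> : (u ^+ (N - k'))^* * v ^+ (N - k') = z ^+ k'.
    have zc : u^* * v = z^* by rewrite /z rmorphM /= conjCK.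
    have e : z^* ^+ (N - k') * z^* ^+ k' = 1.
      by rewrite -exprD subnK ?(ltnW (ltn_ord k')) // -rmorphXn zN' rmorph1.
    rewrite rmorphXn /= -exprMn zc -[LHS]mulr1 -(expr1n _ k') -zz exprMn.
    by rewrite mulrCA e mulr1.
  ring.
rewrite -big_distrr /= geom_root // z_eq1.
case: eqP => [ab|_]; last by rewrite !mulr0 mul0r.
by rewrite /u /v ab -!exprM wNJ mul1r.
Qed.

Lemma parseval (R : realType) (N : nat) (k : 'I_N) (y : 'I_N -> R[i]) :
  (\sum_(k' < N) sqmod (\sum_(a < N) y a * ee R k a k'))%:C%C =
  N%:R * \sum_(a < N) y a * (y a)^*.
Proof.
rewrite rmorph_sum /=.
transitivity (\sum_(k' < N) \sum_(a < N) \sum_(b < N) (y a * (y b)^*) * (ee R k a k' * (ee R k b k')^*)).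
  apply: eq_bigr => k' _; rewrite sqmodE rmorph_sum /= big_distrl /=.
  apply: eq_bigr => a _; rewrite big_distrr /=; apply: eq_bigr => b _.
  rewrite rmorphM; ring.
rewrite exchange_big /=.
transitivity (\sum_(a < N) \sum_(b < N) (y a * (y b)^*) * ((a == b)%:R * N%:R)).
  apply: eq_bigr => a _; rewrite exchange_big /=; apply: eq_bigr => b _.
  by rewrite -big_distrr /= orth2.
rewrite big_distrr /=; apply: eq_bigr => a _.
rewrite (bigD1 a) //= big1 ?addr0; first by rewrite eqxx mul1r mulrC.
by move=> b /negbTE; rewrite eq_sym => ->; rewrite mul0r mulr0.
Qed.
Lemma noiseE (R : realType) (N : nat) (k : 'I_N) (h : 'cV[R[i]]_N) :
  (\sum_(i < N) sqmod (noise_comb k h 0 i))%:C%C =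
  \sum_(a < N) htilde h a 0 * (htilde h a 0)^*.
Proof.
set t := htilde h.
rewrite rmorph_sum /=.
transitivity (\sum_(i < N) \sum_(a < N) \sum_(b < N)
   (t a 0 * (t b 0)^*) * ((Fmat R k a i)^* * Fmat R k b i)).
  apply: eq_bigr => i _; rewrite sqmodE /noise_comb mxE rmorph_sum /= big_distrl /=.
  apply: eq_bigr => a _; rewrite big_distrr /=; apply: eq_bigr => b _.
  rewrite !mxE !cconjE !rmorphM /= !conjCK; ring.
rewrite exchange_big /=.
transitivity (\sum_(a < N) \sum_(b < N) (t a 0 * (t b 0)^*) * ((a == b)%:R * ee R k a k)).
  apply: eq_bigr => a _; rewrite exchange_big /=; apply: eq_bigr => b _.
  rewrite -big_distrr /= -Dlemma; congr (_ * _); rewrite mxE; apply: eq_bigr => i _.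
  by rewrite !mxE cconjE.
apply: eq_bigr => a _.
rewrite (bigD1 a) //= big1 ?addr0; first by rewrite eqxx mul1r ee_kk mulr1.
by move=> b /negbTE; rewrite eq_sym => ->; rewrite mul0r mulr0.
Qed.
Lemma expj_neq0 (R : realType) (x : R) : expj x != 0.
Proof. by apply/eqP => e0; have := expjJ _ x; rewrite e0 mul0r => /eqP; rewrite eq_sym oner_eq0. Qed.

Lemma expjV (R : realType) (x : R) : (expj x)^* ^-1 = expj x.
Proof. by rewrite -[LHS]mul1r -(expjJ _ x) -mulrA mulfV ?mulr1 // conjC_eq0 expj_neq0. Qed.

Lemma ht_form (R : realType) (N : nat) (al : R[i]) (phi : R) (a : 'I_N) :
  htilde (al *: steer N phi) a 0 = (al^*)^-1 * expj (pi * a%:R * sin phi).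
Proof. by rewrite !mxE cconjE rmorphM /= invfM expjV. Qed.

Lemma y_form (R : realType) (N : nat) (al ak : R[i]) (phi th : R) (a : 'I_N) :
  htilde (al *: steer N phi) a 0 * ((ak *: steer N th) a 0)^* =
  (ak^* / al^*) * expj (pi * (sin phi - sin th)) ^+ a.
Proof.
rewrite ht_form !mxE rmorphM /= -expjN -expjn.
rewrite mulrACA -expjD [al^*^-1 * _]mulrC; congr (_ * expj _); ring.
Qed.

Lemma sqmod_ge0 (R : realType) (z : R[i]) : 0 <= sqmod z.
Proof. by rewrite /sqmod addr_ge0 // sqr_ge0. Qed.

Lemma sqmod_gt0 (R : realType) (z : R[i]) : z != 0 -> 0 < sqmod z.
Proof.
case: z => a b nz; rewrite /sqmod; change (0 < a ^+ 2 + b ^+ 2).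
have ha := sqr_ge0 a; have hb := sqr_ge0 b.
case: (ltP 0 (a ^+ 2 + b ^+ 2)) => // hle.
have /eqP : a ^+ 2 = 0 by lra.
have /eqP : b ^+ 2 = 0 by lra.
rewrite !sqrf_eq0 => /eqP b0 /eqP a0.
by move: nz; rewrite a0 b0 eqxx.
Qed.

Lemma sqmodM (R : realType) (x y : R[i]) : sqmod (x * y) = sqmod x * sqmod y.
Proof. by apply: (@complexI R); rewrite rmorphM /= !sqmodE rmorphM /= mulrACA. Qed.

Lemma sqmod_expj (R : realType) (x : R) : sqmod (expj x) = 1.
Proof. by rewrite /sqmod /= cos2Dsin2. Qed.
Lemma vval_form (R : realType) (N : nat) (k k' : 'I_N) (al ak : R[i]) (phi th : R) :
  vval k k' (al *: steer N phi) (ak *: steer N th) =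
  \sum_(a < N) ((ak^* / al^*) * expj (pi * (sin phi - sin th)) ^+ a) * ee R k a k'.
Proof.
rewrite /vval quadE; apply: eq_bigr => a _; rewrite -y_form; ring.
Qed.

Lemma gval_form (R : realType) (N : nat) (k : 'I_N) (al ak : R[i]) (phi th : R) :
  gval k (al *: steer N phi) (ak *: steer N th) =
  \sum_(a < N) (ak^* / al^*) * expj (pi * (sin phi - sin th)) ^+ a.
Proof.
rewrite -[gval _ _ _]/(vval k k _ _) vval_form; apply: eq_bigr => a _.
by rewrite ee_kk mulr1.
Qed.

Lemma total_form (R : realType) (N : nat) (k : 'I_N) (al ak : R[i]) (phi th : R) :
  \sum_(k' < N) sqmod (vval k k' (al *: steer N phi) (ak *: steer N th)) =
  N%:R * N%:R * sqmod (ak^* / al^*).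
Proof.
apply: (@complexI R).
under eq_bigr => k' _ do rewrite vval_form.
rewrite parseval.
under eq_bigr => a _ do rewrite -sqmodE sqmodM -expjn sqmod_expj mulr1.
rewrite sumr_const card_ord -mulr_natr !rmorphM /= !rmorph_nat; ring.
Qed.

Lemma noise_form (R : realType) (N : nat) (k : 'I_N) (al : R[i]) (phi : R) :
  \sum_(i < N) sqmod (noise_comb k (al *: steer N phi) 0 i) =
  N%:R * sqmod ((al^*)^-1).
Proof.
apply: (@complexI R); rewrite noiseE.
under eq_bigr => a _ do rewrite -sqmodE ht_form sqmodM sqmod_expj mulr1.
by rewrite sumr_const card_ord rmorphM /= rmorph_nat mulr_natl.
Qed.
Lemma sum_pow_eq (R : realType) (N : nat) (t : R) : (2 <= N)%N ->
  sqmod (\sum_(a < N) expj t ^+ a) = N%:R ^+ 2 -> expj t = 1.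
Proof.
move=> N2 hS.
set r := expj t.
have nr : `|r| = 1.
  by apply/eqP; rewrite -(sqrp_eq1 (normr_ge0 _)) normCK expjJ.
have nS : `|\sum_(a < N) r ^+ a| = N%:R.
  apply/eqP; rewrite -(eqrXn2 (_ : (0 < 2)%N)) ?normr_ge0 ?ler0n //.
  by rewrite normCK -sqmodE hS rmorphXn /= rmorph_nat.
have h1r : 2 <= `|1 + r|.
  clear hS; case: N N2 nS => [|[|N']] // _.
  rewrite big_ord_recl big_ord_recl /= expr0 expr1 addrA => nS.
  have : `|1 + r + \sum_(i < N') r ^+ (bump 0 (bump 0 i))| <= `|1 + r| + N'%:R.
    apply: le_trans (ler_normD _ _) _; rewrite lerD2l.
    apply: le_trans (ler_norm_sum _ _ _) _.
    rewrite (eq_bigr (fun=> 1)) ?sumr_const ?card_ord //.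
    by move=> i _; rewrite normrX nr expr1n.
  by rewrite nS -addn2 natrD addrC lerD2r.
have E : `|1 + r| ^+ 2 = (2 + 2 * cos t)%:C%C.
  rewrite normCK rmorphD /= rmorph1 /r /expj.
  apply/eqP; rewrite eq_complex /=; apply/andP; split; apply/eqP.
    have := cos2Dsin2 t; lra.
  ring.
have : 2 ^+ 2 <= `|1 + r| ^+ 2 by rewrite lerXn2r ?nnegrE ?normr_ge0 ?ler0n.
rewrite E (_ : 2 ^+ 2 = (2 ^+ 2 : R)%:C%C); last by rewrite rmorphXn /= rmorph_nat.
rewrite lecR => hc.
have c1 : cos t = 1 by have := cos_le1 t; lra.
have s0 : sin t = 0 by apply/eqP; rewrite -sqrf_eq0 sin2cos2 c1 expr1n subrr.
by rewrite /r /expj c1 s0.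
Qed.
Lemma ineq1 (R : realType) (P Q T G : R) : 0 < P -> 0 < Q -> 0 <= G -> G <= T ->
  P * G / (P * (T - G) + Q) <= P * T / (P * (T - T) + Q).
Proof.
move=> P0 Q0 G0 GT.
have d1 : 0 < P * (T - G) + Q by rewrite ltr_wpDl // mulr_ge0 ?subr_ge0 // ltW.
have d2 : 0 < P * (T - T) + Q by rewrite subrr mulr0 add0r.
rewrite ler_pdivrMr // mulrAC ler_pdivlMr // subrr mulr0 add0r.
have h : 0 <= P * (T - G) by rewrite mulr_ge0 ?subr_ge0 // ltW.
have T0 : 0 <= T by apply: le_trans GT.
have h1 : 0 <= P * T * (P * (T - G)) by rewrite !mulr_ge0 ?subr_ge0 // ltW.
have h2 : 0 <= P * Q * (T - G) by rewrite !mulr_ge0 ?subr_ge0 // ltW.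
nra.
Qed.

Lemma ineq2 (R : realType) (P Q T G : R) : 0 < P -> 0 < Q -> 0 <= G -> G <= T ->
  P * T / (P * (T - T) + Q) <= P * G / (P * (T - G) + Q) -> G = T.
Proof.
move=> P0 Q0 G0 GT.
have d1 : 0 < P * (T - G) + Q by rewrite ltr_wpDl // mulr_ge0 ?subr_ge0 // ltW.
have d2 : 0 < P * (T - T) + Q by rewrite subrr mulr0 add0r.
rewrite ler_pdivrMr // mulrAC ler_pdivlMr // subrr mulr0 add0r => h.
have T0 : 0 <= T by apply: le_trans GT.
have hPQ : 0 < P * Q by rewrite mulr_gt0.
have : (T - G) * (P * P * T + P * Q) <= 0 by nra.
have hp : 0 < P * P * T + P * Q by rewrite ltr_wpDl // mulr_ge0 // mulr_ge0 // ltW.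
rewrite pmulr_lle0 // subr_le0 => TG; apply/eqP; by rewrite eq_le GT TG.
Qed.

Lemma f_form (R : realType) (N : nat) (pt sigma2 : R) (k : 'I_N) (ak al : R[i]) (th phi : R) :
  sinr pt sigma2 k (al *: steer N phi) (ak *: steer N th) =
  pt / N%:R * sqmod (\sum_(a < N) (ak^* / al^*) * expj (pi * (sin phi - sin th)) ^+ a) /
  (pt / N%:R * (N%:R * N%:R * sqmod (ak^* / al^*) - sqmod (\sum_(a < N) (ak^* / al^*) * expj (pi * (sin phi - sin th)) ^+ a))
   + sigma2 * (N%:R * sqmod ((al^*)^-1))).
Proof.
have htot := total_form R N k al ak phi th.
rewrite (bigD1 k) //= -[vval k k _ _]/(gval k _ _) gval_form in htot.
by rewrite /sinr gval_form noise_form -htot [_ + \sum_(_ < _ | _) _]addrC addrK.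
Qed.

Lemma G_le (R : realType) (N : nat) (k : 'I_N) (ak al : R[i]) (th phi : R) :
  sqmod (\sum_(a < N) (ak^* / al^*) * expj (pi * (sin phi - sin th)) ^+ a) <=
  N%:R * N%:R * sqmod (ak^* / al^*).
Proof.
have htot := total_form R N k al ak phi th.
rewrite (bigD1 k) //= -[vval k k _ _]/(gval k _ _) gval_form in htot.
by rewrite -htot lerDl sumr_ge0 // => i _; apply: sqmod_ge0.
Qed.
Theorem corollary1 (R : realType) (N : nat) (pt sigma2 : R) (k : 'I_N)
    (alpha_k : R[i]) (theta_k : R) (alpha_hat : R[i]) :
  (2 <= N)%N -> 0 < pt -> 0 < sigma2 -> alpha_k != 0 -> alpha_hat != 0 ->
  let hk := alpha_k *: steer N theta_k in
  let f := fun phi : R => sinr pt sigma2 k (alpha_hat *: steer N phi) hk in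
  (exists phi : R, -pi <= phi < pi /\
     forall psi : R, -pi <= psi < pi -> f psi <= f phi) /\
  (forall phi : R, -pi <= phi < pi ->
     (forall psi : R, -pi <= psi < pi -> f psi <= f phi) ->
     steer N phi = steer N theta_k).
Proof.
move=> N2 pt0 s0 ak0 al0 hk f.
have N0 : (0 < N)%N by apply: leq_trans N2.
set beta := alpha_k^* / alpha_hat^*.
set P := pt / N%:R.
set T := N%:R * N%:R * sqmod beta.
set Q := sigma2 * (N%:R * sqmod ((alpha_hat^*)^-1)).
set G := fun phi : R => sqmod (\sum_(a < N) beta * expj (pi * (sin phi - sin theta_k)) ^+ a).
have fE : forall phi, f phi = P * G phi / (P * (T - G phi) + Q).
  by move=> phi; rewrite /f /hk f_form.
have GT : forall phi, G phi <= T by move=> phi; apply: G_le.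
have G0 : forall phi, 0 <= G phi by move=> phi; apply: sqmod_ge0.
have P0 : 0 < P by rewrite divr_gt0 // ltr0n.
have Q0 : 0 < Q.
  rewrite mulr_gt0 // mulr_gt0 ?ltr0n // sqmod_gt0 //.
  by rewrite invr_eq0 conjC_eq0.
have beta0 : beta != 0 by rewrite mulf_neq0 ?invr_eq0 ?conjC_eq0.
pose phi0 := asin (sin theta_k).
have sphi0 : sin phi0 = sin theta_k.
  by rewrite /phi0 asinK // in_itv /= sin_geN1 sin_le1.
have hphi0 : -pi <= phi0 < pi.
  have h1 := @asin_geNpi2 R (sin theta_k); have h2 := @asin_lepi2 R (sin theta_k).
  have hs : -1 <= sin theta_k <= 1 by rewrite sin_geN1 sin_le1.
  have := h1 hs; have := h2 hs; have := @pi_gt0 R; rewrite -/phi0.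
  move=> p a b; apply/andP; split; lra.
have Gphi0 : G phi0 = T.
  rewrite /G sphi0 subrr mulr0 expj0.
  under eq_bigr => a _ do rewrite expr1n mulr1.
  rewrite sumr_const card_ord -mulr_natl sqmodM /T; congr (_ * _).
  by apply: (@complexI R); rewrite sqmodE rmorphM /= !rmorph_nat.
have fmax : forall psi, f psi <= f phi0.
  by move=> psi; rewrite !fE Gphi0; apply: ineq1.
split; first by exists phi0; split.
move=> phi hphi hmax.
have : G phi = T.
  apply: (@ineq2 R P Q T (G phi) P0 Q0 (G0 phi) (GT phi)).
  by have := hmax phi0 hphi0; rewrite !fE Gphi0.
rewrite /G -big_distrr /= sqmodM /T => hG.
have hS : sqmod (\sum_(a < N) expj (pi * (sin phi - sin theta_k)) ^+ a) = N%:R ^+ 2.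
  apply: (mulfI (_ : sqmod beta != 0)); first by rewrite gt_eqF // sqmod_gt0.
  by rewrite hG mulrC expr2.
have r1 := sum_pow_eq R N _ N2 hS.
apply/matrixP => a j; rewrite !mxE.
have -> : pi * a%:R * sin phi = pi * a%:R * sin theta_k + a%:R * (pi * (sin phi - sin theta_k)).
  ring.
by rewrite expjD expjn r1 expr1n mulr1.
Qed.
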